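(* Let $G=(V,E,L)$ be a complete graph with loops, $n:=|V|$, whose set of plus loops is $L^+=\{\{j,j\}\}$ for some $j\in V$ (minus loops $L^-$ arbitrary). Introduce auxiliary variables $z_S$ for all $S\subseteq V$ with $|S|\ge3$. Then $\mathrm{QP}(G)$ equals the projection onto the coordinates $V\cup E\cup L$ of the set of all vectors satisfying $$z_{jj}\ \ge\sum_{J\subseteq V:\, j\in J}\frac{\big(\ell_n(J,V\setminus J)\big)^2}{\ell_{n-1}(J\setminus\{j\},V\setminus J)},\qquad \ell_n(J,V\setminus J)\ge0\ \ \forall J\subseteq V,$$ $$z_{ii}\le z_i,\quad z_i\in[0,1]\qquad\forall\{i,i\}\in L^-.$$
   Context: A graph with loops is $G=(V,E,L)$: $V$ finite node set, $E$ a set of unordered pairs of distinct nodes, $L$ a set of loops $\{i,i\}$ partitioned as $L=L^-\cup L^+$ (minus/plus loops); it is complete if $E$ contains all pairs of distinct nodes. $\mathrm{QP}(G):=\mathrm{conv}\{z\in\mathbb{R}^{V\cup E\cup L}: z_{ii}\ge z_i^2\ \forall\{i,i\}\in L^+,\ z_{ii}\le z_i^2\ \forall \{i,i\}\in L^-,\ z_{ij}=z_iz_j\ \forall \{i,j\}\in E,\ z_i\in[0,1]\ \forall i\in V\}$. For $S\subseteq V$: $z_\emptyset:=1$, $z_{\{k\}}:=z_k$, $z_{\{k,l\}}$ the edge variable, and $z_S$ auxiliary for $|S|\ge3$ (loop variables $z_{ii}$ are distinct). For disjoint $J_1,J_2$ with $|J_1\cup J_2|=d$, $\ell_d(J_1,J_2):=\sum_{t\subseteq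 J_2}(-1)^{|t|}z_{J_1\cup t}$. Each $u^2/v$ denotes the closed perspective: $u^2/v$ if $v>0$, $0$ if $u=v=0$, $+\infty$ if $u\ne0,v=0$. *)

(* Defs.v *)
From HB Require Import structures.
From mathcomp Require Import all_boot all_order all_algebra.
From mathcomp Require Import reals constructive_ereal.
Set Implicit Arguments. Unset Strict Implicit. Unset Printing Implicit Defensive.
Import Order.TTheory GRing.Theory Num.Theory.
Local Open Scope ring_scope.

(* The complete graph has one edge variable for every
   2-element subset of V.
   A coordinate of R^{V ∪ E ∪ L} is either a nonempty set S of size <= 2
   (S = {k} is the node coordinate z_k, S = {k,l} the edge coordinate z_kl)
   or a looped node i (the loop coordinate z_ii). *)
Definition coord_ok (n : nat) (L : {set 'I_n}) (c : {set 'I_n} + 'I_n) : bool :=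
  match c with
  | inl A => (0 < #|A| <= 2)%N
  | inr i => i \in L
  end.

Definition qcoord (n : nat) (L : {set 'I_n}) := {c : {set 'I_n} + 'I_n | coord_ok L c}.

(* Projection onto the coordinates V ∪ E ∪ L of a full vector given by
   set-indexed variables z_S and loop variables y_i = z_ii. *)
Definition proj_pt (R : Type) (n : nat) (L : {set 'I_n})
  (z : {set 'I_n} -> R) (y : 'I_n -> R) : qcoord L -> R :=
  fun c => match val c with inl A => z A | inr i => y i end.

Definition conv_hull (R : numDomainType) (T : Type) (A : (T -> R) -> Prop)
  : (T -> R) -> Prop :=
  fun p => exists (k : nat) (lam : 'I_k -> R) (q : 'I_k -> T -> R),
    (forall i, 0 <= lam i) /\ \sum_(i < k) lam i = 1 /\
    (forall i, A (q i)) /\ (forall c, p c = \sum_(i < k) lam i * q i c).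

(* Generating points: z_i = x_i in [0,1],
   z_kl = x_k x_l (= product over the pair), loop constraints. *)
Definition QP (R : realDomainType) (n : nat) (Lp Lm : {set 'I_n})
  : (qcoord (Lp :|: Lm) -> R) -> Prop :=
  conv_hull (fun p => exists (x : 'I_n -> R) (y : 'I_n -> R),
    (forall i, 0 <= x i <= 1) /\
    (forall i, i \in Lp -> y i >= x i ^+ 2) /\
    (forall i, i \in Lm -> y i <= x i ^+ 2) /\
    p = proj_pt (fun A => \prod_(k in A) x k) y).

(* ell_d(J1, J2) = sum_{t ⊆ J2} (-1)^{|t|} z_{J1 ∪ t}  (d = |J1 ∪ J2|). *)
Definition ell (R : ringType) (n : nat) (z : {set 'I_n} -> R) (J1 J2 : {set 'I_n}) : R :=
  \sum_(t : {set 'I_n} | t \subset J2) (-1) ^+ #|t| * z (J1 :|: t).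

Definition persp (R : realFieldType) (u v : R) : \bar R :=
  if 0 < v then (u ^+ 2 / v)%:E
  else if (u == 0) && (v == 0) then 0%E else +oo%E.

Definition ext_proj (R : realFieldType) (n : nat) (j : 'I_n) (Lm : {set 'I_n})
  : (qcoord ([set j] :|: Lm) -> R) -> Prop :=
  fun p => exists (z : {set 'I_n} -> R) (y : 'I_n -> R),
    z set0 = 1 /\
    ((y j)%:E >= \sum_(J : {set 'I_n} | j \in J) persp (ell z J (~: J)) (ell z (J :\ j) (~: J)))%E /\
    (forall J : {set 'I_n}, 0 <= ell z J (~: J)) /\
    (forall i, i \in Lm -> y i <= z [set i] /\ 0 <= z [set i] <= 1) /\
    p = proj_pt z y.

Arguments QP {R n} Lp Lm _.
Arguments ext_proj {R n} j Lm _.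

(* Main.v *)
Require Import Defs.
From HB Require Import structures.
From mathcomp Require Import all_boot all_order all_algebra.
From mathcomp Require Import reals constructive_ereal.
From mathcomp Require Import ring lra.
From Stdlib Require Import FunctionalExtensionality.
Import Order.TTheory GRing.Theory Num.Theory.
Local Open Scope ring_scope.
Section Helpers.
Variable R : comNzRingType.
Variable n : nat.
Local Notation T := {set 'I_n}.

Lemma distr (F G : 'I_n -> R) : \prod_i (F i + G i) =
  \sum_(J : T) \prod_i (if i \in J then F i else G i).
Proof. by rewrite (bigA_distr 1 +%R). Qed.

Lemma prod_if (A : T) (f : 'I_n -> R) :
  \prod_i (if i \in A then f i else 1) = \prod_(i in A) f i.
Proof. by rewrite -big_mkcond. Qed.

Lemma sign_prod (A : T) : (-1) ^+ #|A| = \prod_i (if i \in A then -1 else 1) :> R.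
Proof. by rewrite prod_if prodr_const. Qed.

Lemma prod_zero (P : pred 'I_n) (f : 'I_n -> R) i : f i = 0 -> \prod_i f i = 0.
Proof. by move=> fi; rewrite (bigD1 i) //= fi mul0r. Qed.

Lemma ell_zx (x : 'I_n -> R) (J1 J2 : T) : [disjoint J1 & J2] ->
  ell (fun S => \prod_(i in S) x i) J1 J2 =
  \prod_i (if i \in J1 then x i else if i \in J2 then 1 - x i else 1).
Proof.
move=> dis.
have -> : \prod_i (if i \in J1 then x i else if i \in J2 then 1 - x i else 1) =
  \prod_i ((if i \in J2 then - x i else 0) + (if i \in J1 then x i else 1)).
  apply: eq_bigr => i _.
  case: (boolP (i \in J1)) => h1; case: (boolP (i \in J2)) => h2 //=.
  - by move: dis; rewrite disjoint_sym => /disjointFr/(_ h2); rewrite h1.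
  - by rewrite add0r.
  - by rewrite addrC.
  - by rewrite add0r.
rewrite distr /ell big_mkcond /=; apply: eq_bigr => t _.
case: ifP => sub.
  rewrite sign_prod -prod_if -big_split /=; apply: eq_bigr => i _.
  rewrite in_setU; case: (boolP (i \in t)) => it /=.
    by rewrite (subsetP sub _ it) orbT mulN1r.
  by rewrite orbF mul1r.
case/subsetPn: (negbT sub) => i it ni2.
by symmetry; apply: (prod_zero xpredT _ i); rewrite it (negbTE ni2).
Qed.

Lemma ell_lin m (lam : 'I_m -> R) (w : 'I_m -> T -> R) (J1 J2 : T) :
  ell (fun S => \sum_(k < m) lam k * w k S) J1 J2 =
  \sum_(k < m) lam k * ell (w k) J1 J2.
Proof.
rewrite /ell; under eq_bigr do rewrite mulr_sumr.
rewrite exchange_big /=; apply: eq_bigr => k _; rewrite mulr_sumr.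
by apply: eq_bigr => t _; rewrite mulrCA.
Qed.

Lemma PL2 (P : pred T) (g : T -> R) (j : 'I_n) :
  \sum_(K | P K && (j \in K)) g K = \sum_(t | P (j |: t) && (j \notin t)) g (j |: t).
Proof.
rewrite (reindex_onto (fun t => j |: t) (fun K => K :\ j)).
  apply: eq_bigl => t; rewrite setU11 andbT; congr (_ && _).
  case: (boolP (j \in t)) => jt; first by apply/negbTE/eqP => E; move: jt; rewrite -E setD11.
  by rewrite setU1K // eqxx.
by move=> K /andP[_ jK]; rewrite setD1K.
Qed.

Lemma PL (f : T -> R) (j : 'I_n) :
  \sum_J f J = \sum_(K : T | j \in K) (f K + f (K :\ j)).
Proof.
rewrite (bigID (fun J : T => j \in J)) /= big_split /=; congr (_ + _).
have := PL2 xpredT (fun K => f (K :\ j)) j; rewrite /= => ->.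
by apply: eq_bigr => t jt; rewrite setU1K.
Qed.

Lemma setCD1 (J : T) (j : 'I_n) : j \in J -> ~: (J :\ j) = j |: ~: J.
Proof.
move=> jJ; apply/setP => i; rewrite !inE.
by case: (eqVneq i j) => [->|] //=; rewrite jJ.
Qed.

Lemma ellV (z : T -> R) (J : T) (j : 'I_n) : j \in J ->
  ell z (J :\ j) (~: (J :\ j)) = ell z (J :\ j) (~: J) - ell z J (~: J).
Proof.
move=> jJ; rewrite /ell (bigID (fun t : T => j \in t)) /= addrC setCD1 //; congr (_ + _).
  apply: eq_bigl => t.
  case: (boolP (j \in t)) => jt /=; rewrite ?andbF ?andbT //.
    by apply/esym/negbTE/negP => h; have := subsetP h j jt; rewrite inE jJ.
  apply/idP/idP => h; last by apply: (subset_trans h); rewrite subsetU1.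
  apply/subsetP => i it; have := subsetP h i it; rewrite !inE.
  by case/orP => // /eqP E; move: jt; rewrite -E it.
have := PL2 (fun t => t \subset j |: ~: J) (fun t => (-1) ^+ #|t| * z (J :\ j :|: t)) j.
rewrite /= => ->; rewrite -sumrN; apply: eq_big => t.
  rewrite subUset sub1set !inE eqxx /=.
  apply/idP/idP => [/andP[h jt] | h].
    apply/subsetP => i it; have := subsetP h i it; rewrite !inE.
    by case/orP => // /eqP E; move: jt; rewrite -E it.
  apply/andP; split; first by apply: (subset_trans h); rewrite subsetU1.
  by apply/negP => jt; have := subsetP h j jt; rewrite inE jJ.
move=> /andP[_ jt].
rewrite cardsU1 jt /= exprS mulN1r mulNr; congr (- (_ * z _)).
by rewrite setUCA setUA setD1K.
Qed.

Lemma inner_mob (S U : T) : \sum_(J : T) (if (S \subset J) && (J \subset U)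
  then (-1) ^+ #|U :\: J| else 0) = (S == U)%:R :> R.
Proof.
have := distr (fun i => if i \in U then 1 else 0)
  (fun i => if i \in S then 0 else if i \in U then -1 else 1).
have -> : \prod_i ((if i \in U then 1 else 0) +
    (if i \in S then 0 else if i \in U then -1 else 1)) = (S == U)%:R :> R.
  case: eqVneq => [<-|neq].
    by apply: big1 => i _; case: (i \in S); rewrite ?addr0 ?add0r.
  have : ~~ ((S \subset U) && (U \subset S)) by rewrite -eqEsubset.
  case/nandP => /subsetPn[i h1 h2]; apply: (prod_zero xpredT _ i).
    by rewrite h1 (negbTE h2) add0r.
  by rewrite h1 (negbTE h2) addrN.
move=> ->; apply: eq_bigr => J _.
case: ifP => [/andP[sj ju] | ].
  rewrite sign_prod; apply: eq_bigr => i _; rewrite !inE.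
  case: (boolP (i \in J)) => iJ /=; first by rewrite (subsetP ju _ iJ).
  case: (boolP (i \in S)) => iS; first by rewrite (subsetP sj _ iS) in iJ.
  by [].
move/negbT/nandP => [] /subsetPn[i h1 h2]; symmetry; apply: (prod_zero xpredT _ i).
  by rewrite (negbTE h2) h1.
by rewrite h1 (negbTE h2).
Qed.

Lemma mobius (z : T -> R) (S : T) :
  z S = \sum_(J : T | S \subset J) ell z J (~: J).
Proof.
have step1 : forall J : T, ell z J (~: J) =
    \sum_(U : T | J \subset U) (-1) ^+ #|U :\: J| * z U.
  move=> J; rewrite /ell (reindex_onto (fun U : T => U :\: J) (fun t => J :|: t)).
    apply: eq_big => U.
      rewrite subsetDr /=.
      have -> : J :|: (U :\: J) = J :|: U.
        by apply/setP => i; rewrite !inE; case: (i \in J).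
      by apply/idP/idP => [/eqP/setUidPr|/setUidPr ->].
    by move=> /andP[_ /eqP ->].
  move=> t tJ; rewrite setDUl setDv set0U; apply/setDidPl.
  by rewrite disjoints_subset.
under eq_bigr do rewrite step1.
have -> : \sum_(J : T | S \subset J) \sum_(U : T | J \subset U) (-1) ^+ #|U :\: J| * z U
  = \sum_(J : T) \sum_(U : T) (if (S \subset J) && (J \subset U)
        then (-1) ^+ #|U :\: J| else 0) * z U.
  rewrite big_mkcond; apply: eq_bigr => J _; case: ifP => sj /=.
    by rewrite big_mkcond; apply: eq_bigr => U _; case: ifP => //; rewrite mul0r.
  by rewrite big1 // => U _; rewrite mul0r.
rewrite exchange_big /=; under eq_bigr do rewrite -mulr_suml inner_mob.
rewrite (bigD1 S) //= eqxx mul1r big1 ?addr0 // => U /negbTE neq.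
by rewrite eq_sym neq mul0r.
Qed.
End Helpers.
Lemma cs_persp (R : realFieldType) k (w a : 'I_k -> R) :
  (forall i, 0 <= w i) -> (forall i, 0 <= a i <= 1) ->
  (persp (\sum_i w i * a i) (\sum_i w i) <= (\sum_i w i * a i ^+ 2)%:E)%E.
Proof.
move=> w0 a01.
set U := \sum_i w i * a i; set V := \sum_i w i; set Q := \sum_i w i * a i ^+ 2.
have V0 : 0 <= V by apply: sumr_ge0.
have U0 : 0 <= U by apply: sumr_ge0 => i _; have := a01 i; have := w0 i; nra.
have UV : U <= V by apply: ler_sum => i _; have := a01 i; have := w0 i; nra.
have Q0 : 0 <= Q by apply: sumr_ge0 => i _; have := a01 i; have := w0 i; nra.
rewrite /persp; case: ifP => Vp.
  rewrite lee_fin; set c := U / V.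
  have cV : c * V = U by rewrite /c divfK // gt_eqF.
  have E : \sum_i w i * (a i - c) ^+ 2 = Q - (c *+ 2) * U + c ^+ 2 * V.
    rewrite /Q /U /V mulr_sumr mulr_sumr -sumrB -big_split /=.
    by apply: eq_bigr => i _; ring.
  have : 0 <= \sum_i w i * (a i - c) ^+ 2.
    by apply: sumr_ge0 => i _; apply: mulr_ge0 => //; apply: sqr_ge0.
  rewrite E => h.
  have -> : U ^+ 2 / V = c * U by rewrite /c expr2 mulrAC.
  have e2 : c ^+ 2 * V = c * U by rewrite expr2 -mulrA cV.
  rewrite e2 in h; lra.
have V00 : V = 0 by apply/eqP; rewrite eq_le V0 andbT leNgt Vp.
have -> : U = 0 by apply/eqP; rewrite eq_le U0 andbT -V00.
by rewrite V00 eqxx /= lee_fin.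
Qed.
Lemma fwd (R : realType) (n : nat) (j : 'I_n) (Lm : {set 'I_n})
  (p : qcoord ([set j] :|: Lm) -> R) : QP [set j] Lm p -> ext_proj j Lm p.
Proof.
case=> k [lam [q [lam0 [lam1 [Aq pq]]]]].
have : forall i, exists xy : ('I_n -> R) * ('I_n -> R),
  [/\ (forall s, 0 <= xy.1 s <= 1), xy.1 j ^+ 2 <= xy.2 j,
      (forall s, s \in Lm -> xy.2 s <= xy.1 s ^+ 2) &
      q i = proj_pt (fun A => \prod_(s in A) xy.1 s) xy.2].
  move=> i; have [x [y [h1 [h2 [h3 h4]]]]] := Aq i; exists (x, y); split => //.
  by apply: h2; rewrite inE.
case/fin_all_exists => f hf.
pose X i := (f i).1; pose Y i := (f i).2.
have hX : forall i s, 0 <= X i s <= 1 by move=> i; case: (hf i).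
pose zx i := fun S : {set 'I_n} => \prod_(s in S) X i s.
pose b i (J : {set 'I_n}) := \prod_s (if s \in J :\ j then X i s
   else if s \in ~: J then 1 - X i s else 1).
pose m i (J : {set 'I_n}) := \prod_s (if s \in J then X i s
   else if s \in ~: J then 1 - X i s else 1).
have hb : forall i J, ell (zx i) (J :\ j) (~: J) = b i J.
  by move=> i J; rewrite ell_zx // disjoints_subset setCK subD1set.
have hm : forall i J, ell (zx i) J (~: J) = m i J.
  by move=> i J; rewrite ell_zx // disjoints_subset setCK.
have hmb : forall i (J : {set 'I_n}), j \in J -> m i J = X i j * b i J.
  move=> i J jJ; rewrite /m /b (bigD1 j) //= (bigD1 j (P := xpredT)) //=.
  rewrite !inE eqxx jJ /= mul1r.
  congr (_ * _); apply: eq_bigr => s sj; rewrite !inE sj.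
  by case: (s \in J).
have hb0 : forall i (J : {set 'I_n}), 0 <= b i J.
  move=> i J; apply: prodr_ge0 => s _; have := hX i s.
  by case: (s \in J :\ j); case: (s \in ~: J) => /=; lra.
have hm0 : forall i (J : {set 'I_n}), 0 <= m i J.
  move=> i J; apply: prodr_ge0 => s _; have := hX i s.
  by case: (s \in J); case: (s \in ~: J) => /=; lra.
have hsumb : forall i, \sum_(J : {set 'I_n} | j \in J) b i J = 1.
  move=> i.
  have := distr _ _ (fun s => if s == j then 1 else X i s)
                (fun s => if s == j then 0 else 1 - X i s).
  rewrite big1; last by move=> s _; case: ifP => _; rewrite ?addr0 // addrC subrK.
  move=> ->; rewrite big_mkcond /=; apply: eq_bigr => J _.
  case: ifP => jJ.
    apply: eq_bigr => s _; rewrite !inE.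
    case: eqVneq => [->|sj] /=; first by rewrite jJ.
    by case: (s \in J).
  by symmetry; apply: (prod_zero _ _ xpredT _ j); rewrite jJ eqxx.
exists (fun S => \sum_(i < k) lam i * zx i S), (fun s => \sum_(i < k) lam i * Y i s).
split.
  by rewrite -lam1; apply: eq_bigr => i _; rewrite /zx big_set0 mulr1.
split.
  apply: (le_trans (y := \sum_(J : {set 'I_n} | j \in J)
      (\sum_i (lam i * b i J) * X i j ^+ 2)%:E)).
    apply: lee_sum => J jJ; rewrite !ell_lin.
    have -> : \sum_i lam i * ell (zx i) J (~: J) = \sum_i (lam i * b i J) * X i j.
      by apply: eq_bigr => i _; rewrite hm hmb //; ring.
    have -> : \sum_i lam i * ell (zx i) (J :\ j) (~: J) = \sum_i (lam i * b i J).
      by apply: eq_bigr => i _; rewrite hb.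
    apply: cs_persp => // i; exact: mulr_ge0.
  rewrite sumEFin lee_fin exchange_big /=; apply: ler_sum => i _.
  have -> : \sum_(J : {set 'I_n} | j \in J) lam i * b i J * X i j ^+ 2 =
      lam i * X i j ^+ 2 * \sum_(J : {set 'I_n} | j \in J) b i J.
    by rewrite mulr_sumr; apply: eq_bigr => J _; ring.
  rewrite hsumb mulr1; apply: ler_wpM2l => //; by case: (hf i).
split.
  move=> J; rewrite ell_lin; apply: sumr_ge0 => i _; rewrite hm.
  exact: mulr_ge0.
split.
  move=> s sL; cbv beta; have e1 : forall i, zx i [set s] = X i s by move=> i; rewrite /zx big_set1.
  have e2 : \sum_(i < k) lam i * zx i [set s] = \sum_(i < k) lam i * X i s by apply: eq_bigr => i _; congr (_ * _); apply: e1.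
  rewrite e2.
  split.
    apply: ler_sum => i _; apply: ler_wpM2l => //.
    case: (hf i) => _ _ h _; have := h s sL; have := hX i s; rewrite /X /Y; nra.
  apply/andP; split; first by apply: sumr_ge0 => i _; have := hX i s; have := lam0 i; nra.
  rewrite -lam1; apply: ler_sum => i _; have := hX i s; have := lam0 i; nra.
have hq : forall i, q i = proj_pt (zx i) (Y i) by move=> i; case: (hf i).
apply: functional_extensionality => c; rewrite pq; under eq_bigr do rewrite hq.
by rewrite /proj_pt; case: (val c).
Qed.
Lemma prod_ind (R : comNzRingType) n (B J : {set 'I_n}) :
  \prod_(s in B) ((s \in J)%:R : R) = (B \subset J)%:R.
Proof.
case: (boolP (B \subset J)) => h.
  by rewrite big1 // => s sB; rewrite (subsetP h).
case/subsetPn: h => s sB nJ.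
by rewrite (bigD1 s) //= (negbTE nJ) mul0r.
Qed.

Lemma bwd (R : realType) (n : nat) (j : 'I_n) (Lm : {set 'I_n})
  (hj : j \notin Lm)
  (p : qcoord ([set j] :|: Lm) -> R) : ext_proj j Lm p -> QP [set j] Lm p.
Proof.
case=> z [y [z0 [hps [hell [hLm hp]]]]].
pose mu (J : {set 'I_n}) := ell z J (~: J).
pose v (J : {set 'I_n}) := ell z (J :\ j) (~: J).
have hv : forall J : {set 'I_n}, j \in J -> v J = mu J + mu (J :\ j).
  by move=> J jJ; rewrite /v /mu ellV // addrC subrK.
have hmuv : forall J : {set 'I_n}, j \in J -> mu J <= v J.
  by move=> J jJ; rewrite hv // lerDl; apply: hell.
have hv0 : forall J : {set 'I_n}, j \in J -> 0 <= v J.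
  by move=> J jJ; apply: le_trans (hmuv J jJ); apply: hell.
pose ps J := if 0 < v J then mu J ^+ 2 / v J else 0.
pose r J := if 0 < v J then mu J / v J else 0.
have hpsE : forall J : {set 'I_n}, j \in J -> persp (mu J) (v J) = (ps J)%:E.
  move=> J jJ; rewrite /persp /ps; case: ifP => // vp.
  have v0 : v J = 0.
    by apply/eqP; rewrite eq_le hv0 // andbT leNgt vp.
  have m0 : mu J = 0.
    by apply/eqP; rewrite eq_le hell andbT -v0 hmuv.
  by rewrite v0 m0 eqxx.
have hS : \sum_(J : {set 'I_n} | j \in J) ps J <= y j.
  move: hps; rewrite (eq_bigr (fun J => (ps J)%:E)); last by move=> J jJ; exact: hpsE.
  by rewrite sumEFin lee_fin.
pose D := y j - \sum_(J : {set 'I_n} | j \in J) ps J.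
have hD : 0 <= D by rewrite /D subr_ge0.
have hr : forall J : {set 'I_n}, j \in J -> 0 <= r J <= 1.
  move=> J jJ; rewrite /r; case: ifP => vp; last by rewrite lexx ler01.
  rewrite divr_ge0 ?hell ?(ltW vp) //= ler_pdivrMr // mul1r; exact: hmuv.
have hvr : forall J : {set 'I_n}, j \in J -> v J * r J = mu J.
  move=> J jJ; rewrite /r; case: ifP => vp; first by rewrite mulrC divfK // gt_eqF.
  have v0 : v J = 0 by apply/eqP; rewrite eq_le hv0 // andbT leNgt vp.
  by rewrite v0 mulr0; apply/eqP; rewrite eq_le hell /= -v0 (hmuv J jJ).
have hvr2 : forall J : {set 'I_n}, j \in J -> v J * r J ^+ 2 = ps J.
  move=> J jJ; rewrite /ps expr2 mulrA hvr //; rewrite /r; case: ifP => vp; last by rewrite mulr0.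
  by rewrite mulrA -expr2.
have hE : forall F : {set 'I_n} -> R,
    \sum_(J : {set 'I_n}) F J = \sum_(i < #|{: {set 'I_n}}|) F (enum_val i).
  by move=> F; rewrite (big_enum_val F).
have hsum1 : \sum_(J : {set 'I_n}) mu J = 1.
  have := mobius _ _ z set0; rewrite z0 => E; rewrite [RHS]E.
  by apply: eq_bigl => J; rewrite sub0set.
pose xx (J : {set 'I_n}) (s : 'I_n) : R := if s == j then r (j |: J) else (s \in J)%:R.
pose yy (J : {set 'I_n}) (s : 'I_n) : R :=
  if s == j then r (j |: J) ^+ 2 + D else (s \in J)%:R + (y s - z [set s]).
exists #|{: {set 'I_n}}|, (fun i => mu (enum_val i)),
  (fun i => proj_pt (fun A => \prod_(s in A) xx (enum_val i) s) (yy (enum_val i))).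
split; first by move=> i; apply: hell.
split; first by rewrite -(hE mu).
split.
  move=> i; exists (xx (enum_val i)), (yy (enum_val i)); split; [|split; [|split]] => //.
  - move=> s; rewrite /xx; case: ifP => _; first by apply: hr; rewrite setU11.
    by case: (s \in _) => /=; rewrite ?lexx ?ler01.
  - move=> s; rewrite inE => /eqP ->; rewrite /yy /xx eqxx; lra.
  - move=> s sL; have sj : s != j.
      by apply/eqP => E; rewrite -E sL in hj.
    rewrite /yy /xx (negbTE sj); have := (hLm s sL).1.
    by case: (s \in _) => /=; rewrite ?expr1n ?expr0n /=; lra.
move=> c; rewrite hp; case: c => [c hc].
change (match c with inl A => z A | inr t => y t end =
  \sum_(i < #|{: {set 'I_n}}|) mu (enum_val i) * match c with inl A => \prod_(s in A) xx (enum_val i) s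
                                      | inr t => yy (enum_val i) t end).
case: c hc => [A|s] hc.
  rewrite -(hE (fun J => mu J * \prod_(s in A) xx J s)).
  case: (boolP (j \in A)) => jA.
    have hprod : forall J : {set 'I_n}, \prod_(s in A) xx J s = r (j |: J) * (A :\ j \subset J)%:R.
      move=> J; rewrite (bigD1 j) //= {1}/xx eqxx; congr (_ * _).
      rewrite -prod_ind; apply: eq_big => s; first by rewrite !inE andbC.
      by move=> /andP[_ sj]; rewrite /xx (negbTE sj).
    under eq_bigr do rewrite hprod.
    rewrite (PL _ _ _ j) (mobius _ _ z A).
    transitivity (\sum_(K : {set 'I_n} | j \in K) mu K * (A :\ j \subset K)%:R).
      rewrite big_mkcond [RHS]big_mkcond; apply: eq_bigr => K _.
      have -> : (A \subset K) = (j \in K) && (A :\ j \subset K).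
        by rewrite -{1}(setD1K jA) subUset sub1set.
      by case: (j \in K); case: (A :\ j \subset K); rewrite /= ?mulr1n ?mulr1 ?mulr0.
    apply: eq_bigr => K jK.
    have eK : j |: K = K by apply/setP => s; rewrite !inE; case: eqP => // ->.
    rewrite setD1K // eK subsetD1 setD11 andbT.
    rewrite -[X in X * _ = _](hvr K jK) hv //; ring.
  have hprod : forall J : {set 'I_n}, \prod_(s in A) xx J s = (A \subset J)%:R.
    move=> J; rewrite -prod_ind; apply: eq_bigr => s sA.
    have sj : s != j by apply/eqP => E; rewrite -E sA in jA.
    by rewrite /xx (negbTE sj).
  under eq_bigr do rewrite hprod.
  rewrite (mobius _ _ z A) big_mkcond; apply: eq_bigr => K _.
  by case: (A \subset K); rewrite /= ?mulr1n ?mulr1 ?mulr0.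
rewrite -(hE (fun J => mu J * yy J s)).
case: (eqVneq s j) => [-> | sj].
  rewrite /yy eqxx; under eq_bigr do rewrite mulrDr.
  rewrite big_split /= -mulr_suml hsum1 mul1r (PL _ _ _ j).
  have -> : \sum_(K : {set 'I_n} | j \in K)
     (mu K * r (j |: K) ^+ 2 + mu (K :\ j) * r (j |: K :\ j) ^+ 2) =
     \sum_(K : {set 'I_n} | j \in K) ps K.
    apply: eq_bigr => K jK.
    have eK : j |: K = K by apply/setP => u; rewrite !inE; case: eqP => // ->.
    by rewrite setD1K // eK -hvr2 // hv //; ring.
  by rewrite /D; ring.
rewrite /yy (negbTE sj); under eq_bigr do rewrite mulrDr.
rewrite big_split /= -mulr_suml hsum1 mul1r.
have -> : \sum_(J : {set 'I_n}) mu J * (s \in J)%:R = z [set s].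
  rewrite (mobius _ _ z [set s]) [RHS]big_mkcond; apply: eq_bigr => K _.
  by rewrite sub1set; case: (s \in K); rewrite /= ?mulr1n ?mulr1 ?mulr0.
by ring.
Qed.

Theorem corollary3 (R : realType) (n : nat) (j : 'I_n) (Lm : {set 'I_n})
  (hj : j \notin Lm) (p : qcoord ([set j] :|: Lm) -> R) :
  QP [set j] Lm p <-> ext_proj j Lm p.
Proof.
split; [exact: fwd | exact: bwd].
Qed.
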